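(* Let $X$ be a $k$-dimensional simplicial complex with $n$ vertices and complete $(k-1)$-skeleton. Fix $d>0$ and $f\ge0$ such that for every $F\in X_{k-2}$, $$\sum_{v\in V\setminus F}\big(\deg_{\mathrm{lk}F}(v)-d\big)^2\le f^2(n-k+1).$$ Then (i) $|\langle A_{k-1}b,b\rangle-d|\le kf$ for all $b\in B^{k-1}(X)$ with $\|b\|=1$, and (ii) $|\langle A_{k-1}b,z\rangle|\le kf$ for all unit $b\in B^{k-1}(X)$ and unit $z$ orthogonal to $B^{k-1}(X)$.
   Context: Standard Euclidean inner products and norms. Complexes have linearly ordered vertex sets $V$; $X_i$ is the set of $i$-faces; $[F:G]$ is the oriented incidence number ($(-1)^j$ if $F\setminus G=\{v_j\}$, $F=\{v_0<\dots<v_i\}$; $0$ if $G\not\subseteq F$). Complete $(k-1)$-skeleton: every vertex set of size at most $k$ is a face. $B^{k-1}(X)=\operatorname{im}\delta_{k-2}$, $(\delta f)(H)=\sum_G[H:G]f(G)$. $A_{k-1}(X)$ is the $X_{k-1}\times X_{k-1}$ matrix with entry $[F:F\cap G][G:F\cap G]$ if $|F\cap G|=k-1$ and $F\cup G\in X_k$, else $0$. For $F\in X_{k-2}$, $\mathrm{lk}\,F$ is the graph on $V\setminus F$ with edges $\{u,v\}$ such that $F\cup\{u,v\}\in X_k$. *)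

(* Defs.v *)
From HB Require Import structures.
From mathcomp Require Import all_boot all_order all_algebra.
Set Implicit Arguments. Unset Strict Implicit. Unset Printing Implicit Defensive.
Import Order.TTheory GRing.Theory Num.Theory.
Local Open Scope ring_scope.

Definition simplicial_complex n (X : {set {set 'I_n}}) : Prop :=
  forall F G : {set 'I_n}, F \in X -> G \subset F -> G \in X.

Definition complex_dim n (X : {set {set 'I_n}}) (k : nat) : Prop :=
  (forall F, F \in X -> (#|F| <= k.+1)%N) /\ (exists F, F \in X /\ #|F| = k.+1).

(* complete (k-1)-skeleton: every vertex set of size at most k is a face *)
Definition complete_skeleton n (X : {set {set 'I_n}}) (k : nat) : Prop :=
  forall F : {set 'I_n}, (#|F| <= k)%N -> F \in X.

(* faces with exactly m vertices, i.e. X_{m-1} *)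
Definition faces_sz n (X : {set {set 'I_n}}) (m : nat) : {set {set 'I_n}} :=
  [set F in X | #|F| == m].

Definition incid (R : pzRingType) n (F G : {set 'I_n}) : R :=
  \sum_(v in F) (if G == F :\ v then (-1) ^+ #|[set u in F | (u < v)%N]| else 0).

(* cochains are functions {set 'I_n} -> R, only their values on the relevant
   faces matter. Coboundary from cochains on faces of size m to size m+1. *)
Definition coboundary (R : pzRingType) n (X : {set {set 'I_n}}) (m : nat)
  (g : {set 'I_n} -> R) (H : {set 'I_n}) : R :=
  \sum_(G in faces_sz X m) incid R H G * g G.

Definition ip (R : pzRingType) n (X : {set {set 'I_n}}) (k : nat)
  (u v : {set 'I_n} -> R) : R :=
  \sum_(F in faces_sz X k) u F * v F.

Definition inB (R : pzRingType) n (X : {set {set 'I_n}}) (k : nat)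
  (b : {set 'I_n} -> R) : Prop :=
  exists g : {set 'I_n} -> R,
    forall H, H \in faces_sz X k -> b H = coboundary X k.-1 g H.

Definition Amat (R : pzRingType) n (X : {set {set 'I_n}}) (k : nat)
  (F G : {set 'I_n}) : R :=
  if (#|F :&: G| == k.-1) && (F :|: G \in faces_sz X k.+1)
  then incid R F (F :&: G) * incid R G (F :&: G) else 0.

Definition Aop (R : pzRingType) n (X : {set {set 'I_n}}) (k : nat)
  (b : {set 'I_n} -> R) (F : {set 'I_n}) : R :=
  \sum_(G in faces_sz X k) Amat R X k F G * b G.

(* degree of v in the link graph lk F (graph on V \ F, edges {u,v} with
   F ∪ {u,v} a k-face) *)
Definition lk_deg n (X : {set {set 'I_n}}) (k : nat) (F : {set 'I_n}) (v : 'I_n) : nat :=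
  #|[set u : 'I_n | (u \notin F) && (u != v) && (F :|: [set u; v] \in faces_sz X k.+1)]|.

(* Main.v *)
Require Import Defs.
From HB Require Import structures.
From mathcomp Require Import all_boot all_order all_algebra.
From mathcomp Require Import ring lra.
Import Order.TTheory GRing.Theory Num.Theory.
Local Open Scope ring_scope.
Set Implicit Arguments. Unset Strict Implicit. Unset Printing Implicit Defensive.

Definition sgn (R : pzRingType) n (H : {set 'I_n}) (v : 'I_n) : R :=
  (-1) ^+ #|[set u in H | (u < v)%N]|.

Lemma sgn_sq (R : comPzRingType) n (H : {set 'I_n}) v : sgn R H v * sgn R H v = 1.
Proof. by rewrite /sgn -exprD -signr_odd oddD addbb. Qed.

Lemma sgn_swap (R : comPzRingType) n (H : {set 'I_n}) v w :
  v \in H -> w \in H -> v != w ->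
  sgn R H v * sgn R (H :\ v) w = - (sgn R H w * sgn R (H :\ w) v).
Proof.
suff key : forall v w, v \in H -> w \in H -> (v < w)%N ->
  sgn R H v * sgn R (H :\ v) w = - (sgn R H w * sgn R (H :\ w) v).
  move=> vH wH; case: (ltngtP v w) => [lt _|gt _|/val_inj -> ]; last by rewrite eqxx.
  - exact: key.
  - by rewrite (key w v) // opprK.
move=> {}v {}w vH wH lvw.
have E1 : [set u in H :\ v | (u < w)%N] = [set u in H | (u < w)%N] :\ v.
  by apply/setP => u; rewrite !inE andbA.
have E2 : [set u in H :\ w | (u < v)%N] = [set u in H | (u < v)%N].
  apply/setP => u; rewrite !inE; have [->|//] := eqVneq u w.
  by rewrite /= (ltnNge w v) (ltnW lvw) andbF.
have C : #|[set u in H | (u < w)%N]| = (#|[set u in H | (u < w)%N] :\ v|).+1.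
  by rewrite (cardsD1 v) !inE vH lvw.
rewrite /sgn E1 E2 C exprS; ring.
Qed.

Lemma incid_del (R : pzRingType) n (F : {set 'I_n}) v :
  v \in F -> incid R F (F :\ v) = sgn R F v.
Proof.
move=> vF; rewrite /incid (bigD1 v) //= eqxx big1 ?addr0 // => u /andP[uF uv].
case: eqP => // E; exfalso.
have : v \in F :\ u by rewrite !inE vF eq_sym uv.
by rewrite -E !inE eqxx.
Qed.

Lemma cobound_eq (R : pzRingType) n (X : {set {set 'I_n}}) m (h : {set 'I_n} -> R) (F : {set 'I_n}) :
  complete_skeleton X m.+1 -> #|F| = m.+1 ->
  coboundary X m h F = \sum_(v in F) sgn R F v * h (F :\ v).
Proof.
move=> cs cF; rewrite /coboundary /incid.
under eq_bigr do rewrite mulr_suml.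
rewrite exchange_big /=; apply: eq_bigr => v vF.
have inS : F :\ v \in faces_sz X m.
  have cD : #|F :\ v| = m by move: cF; rewrite (cardsD1 v) vF => -[].
  by rewrite inE cD eqxx andbT; apply: cs; rewrite cD.
rewrite (bigD1 (F :\ v)) //= eqxx big1 ?addr0 // => G /andP[_ /negPf ->].
by rewrite mul0r.
Qed.
Lemma setD1C n (H : {set 'I_n}) u v : H :\ u :\ v = H :\ v :\ u.
Proof. by apply/setP => x; rewrite !inE andbCA. Qed.

Lemma delta_zero (R : rcfType) n (h : {set 'I_n} -> R) (H : {set 'I_n}) :
  \sum_(u in H) sgn R H u * (\sum_(v in H :\ u) sgn R (H :\ u) v * h (H :\ u :\ v)) = 0.
Proof.
set S := LHS.
pose t u v := sgn R H u * sgn R (H :\ u) v * h (H :\ u :\ v).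
have ES : S = \sum_u \sum_v (if (u \in H) && (v \in H :\ u) then t u v else 0).
  rewrite /S big_mkcond /=; apply: eq_bigr => u _.
  case: (boolP (u \in H)) => uH /=; last first.
    by rewrite big1 // => v _; case: ifP.
  rewrite mulr_sumr big_mkcond /=; apply: eq_bigr => v _.
  by case: ifP => // _; rewrite /t mulrA.
have : S = - S.
  rewrite {1}ES exchange_big /= ES -sumrN; apply: eq_bigr => u _.
  rewrite -sumrN; apply: eq_bigr => v _.
  have -> : (v \in H) && (u \in H :\ v) = (u \in H) && (v \in H :\ u).
    by rewrite !inE [u == v]eq_sym; case: (u \in H); case: (v \in H); case: (v == u).
  case: ifP => [/andP[uH]|]; last by rewrite oppr0.
  rewrite !inE => /andP[vu vH].
  rewrite /t setD1C (sgn_swap R vH uH vu).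
  ring.
lra.
Qed.

Lemma flip_sum (R : rcfType) n (b : {set 'I_n} -> R) (F : {set 'I_n}) w :
  w \notin F ->
  \sum_(u in w |: F) sgn R (w |: F) u * b ((w |: F) :\ u) = 0 ->
  \sum_(v in F) sgn R F v * sgn R (w |: (F :\ v)) w * b (w |: (F :\ v)) = b F.
Proof.
move=> wF; set H := w |: F => dz.
have wH : w \in H by rewrite setU11.
have HwF : H :\ w = F by rewrite /H setU1K.
have Hv : forall v, v \in F -> w |: (F :\ v) = H :\ v.
  move=> v vF; apply/setP => x; rewrite !inE.
  case: (eqVneq x v) => [->|_] /=; last by [].
  by rewrite orbF; apply/negbTE; apply: contraNneq wF => <-.
move: dz; rewrite (bigD1 w) //= HwF.
have -> : \sum_(i in H | i != w) sgn R H i * b (H :\ i) =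
          \sum_(v in F) sgn R H v * b (H :\ v).
  apply: eq_bigl => x; rewrite /H !inE.
  by case: (eqVneq x w) => [->|] /=; [rewrite (negPf wF) | rewrite andbT].
move=> dz.
have -> : \sum_(v in F) sgn R F v * sgn R (w |: (F :\ v)) w * b (w |: (F :\ v))
   = - sgn R H w * \sum_(v in F) sgn R H v * b (H :\ v).
  rewrite mulr_sumr; apply: eq_bigr => v vF; rewrite Hv //.
  have vH : v \in H by rewrite /H inE vF orbT.
  have vw : v != w by apply: contraNneq wF => <-.
  have sw := sgn_swap R vH wH vw; rewrite HwF in sw.
  have s1 := sgn_sq R H v; have s2 := sgn_sq R H w.
  have s3 := sgn_sq R (H :\ v) w.
  have s4 := sgn_sq R F v.
  have -> : sgn R F v * sgn R (H :\ v) w = - (sgn R H v * sgn R H w).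
    move: sw s1 s4; set a := sgn R H v; set c := sgn R F v; set e := sgn R (H :\ v) w.
    set bb := sgn R H w => sw s1 s4.
    transitivity (c * e * (a * a)); first by rewrite s1 mulr1.
    transitivity ((a * e) * c * a); first ring.
    rewrite sw; transitivity (- (a * bb) * (c * c)); first ring.
    by rewrite s4 mulr1.
  ring.
have -> : \sum_(v in F) sgn R H v * b (H :\ v) = - (sgn R H w * b F) by lra.
have s2 := sgn_sq R H w.
transitivity ((sgn R H w * sgn R H w) * b F); first ring.
by rewrite s2 mul1r.
Qed.

Lemma dcount (R : rcfType) n m (phi : {set 'I_n} -> 'I_n -> R) :
  \sum_(F : {set 'I_n} | #|F| == m.+1) \sum_(v in F) phi (F :\ v) v =
  \sum_(G : {set 'I_n} | #|G| == m) \sum_(w in ~: G) phi G w.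
Proof.
have L : \sum_(F : {set 'I_n} | #|F| == m.+1) \sum_(v in F) phi (F :\ v) v =
   \sum_v \sum_(F : {set 'I_n} | (#|F| == m.+1) && (v \in F)) phi (F :\ v) v.
  by rewrite (exchange_big_dep xpredT).
have Rr : \sum_(G : {set 'I_n} | #|G| == m) \sum_(w in ~: G) phi G w =
   \sum_w \sum_(G : {set 'I_n} | (#|G| == m) && (w \notin G)) phi G w.
  rewrite (exchange_big_dep xpredT) //=; apply: eq_bigr => v _; apply: eq_bigl => F.
  by rewrite inE.
rewrite L Rr; apply: eq_bigr => v _.
rewrite (reindex_onto (fun G => v |: G) (fun F => F :\ v)) /=; last first.
  by move=> F /andP[_ vF]; rewrite setD1K.
apply: eq_big => [G|G /andP[_ /eqP ->] //].
rewrite setU11 andbT cardsU1.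
case: (boolP (v \in G)) => vG /=.
  rewrite andbF; apply/negP => /andP[_ /eqP E].
  by move: vG; rewrite -E !inE eqxx.
by rewrite setU1K // eqxx andbT add1n eqSS.
Qed.

Lemma CS (R : rcfType) (I : finType) (P : pred I) (a c : I -> R) :
  (\sum_(i | P i) a i * c i) ^+ 2 <=
  (\sum_(i | P i) a i ^+ 2) * (\sum_(i | P i) c i ^+ 2).
Proof.
set A := \sum_(i | P i) a i ^+ 2; set B := \sum_(i | P i) c i ^+ 2.
set C := \sum_(i | P i) a i * c i.
have A0 : 0 <= A by apply: sumr_ge0 => i _; apply: sqr_ge0.
have B0 : 0 <= B by apply: sumr_ge0 => i _; apply: sqr_ge0.
have [Az|Ap] := eqVneq A 0.
  have ai : forall i, P i -> a i = 0.
    move=> i Pi; have := (psumr_eq0P (fun j _ => sqr_ge0 (a j)) Az Pi).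
    by move/eqP; rewrite sqrf_eq0 => /eqP.
  have -> : C = 0 by rewrite /C big1 // => i Pi; rewrite ai // mul0r.
  by rewrite Az expr0n /= mul0r.
have Apos : 0 < A by rewrite lt_def Ap A0.
set t := C / A.
have E : \sum_(i | P i) (a i * t - c i) ^+ 2 = t ^+ 2 * A - (2 * t) * C + B.
  rewrite /A /C /B !mulr_sumr -sumrB -big_split /=; apply: eq_bigr => i _; ring.
have : 0 <= \sum_(i | P i) (a i * t - c i) ^+ 2 by apply: sumr_ge0 => i _; apply: sqr_ge0.
rewrite E /t => H.
have H2 : 0 <= (C ^+ 2 / A - 2 * C ^+ 2 / A + B).
  move: H; congr (0 <= _); field; exact: Ap.
have H3 : 0 <= (A * B - C ^+ 2) / A.
  move: H2; congr (0 <= _); field; exact: Ap.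
have H4 : 0 <= A * B - C ^+ 2.
  by move: H3; rewrite pmulr_lge0 // invr_gt0.
by rewrite -subr_ge0 mulrC; move: H4; rewrite [A * B]mulrC.
Qed.

Lemma A_expand (R : rcfType) n (X : {set {set 'I_n}}) m (b : {set 'I_n} -> R)
  (F G : {set 'I_n}) :
  #|F| = m.+1 -> #|G| = m.+1 ->
  Amat R X m.+1 F G * b G =
  \sum_(w | (w \notin F) && (F :|: [set w] \in faces_sz X m.+2))
     \sum_(v in F) (if G == w |: (F :\ v) then sgn R F v * sgn R G w * b G else 0).
Proof.
move=> cF cG; rewrite /Amat /=.
have [cI|ncI] := eqVneq #|F :&: G| m; last first.
  rewrite /= mul0r big1 // => w /andP[wF _]; rewrite big1 // => v vF.
  case: eqP => [EG|//]; exfalso; move/eqP: ncI; apply.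
  have -> : F :&: G = F :\ v.
    apply/setP => x; rewrite EG !inE.
    case: (eqVneq x w) => [->|_] /=; first by rewrite (negPf wF) andbF.
    by case: (x \in F); case: (x != v).
  by move: cF; rewrite (cardsD1 v) vF => -[].
have cFG : #|F :\: G| = 1%N by rewrite cardsD cF cI subSnn.
have cGF : #|G :\: F| = 1%N by rewrite cardsD cG setIC cI subSnn.
have [v0 Ev0] := cards1P (introT eqP cFG); have [w0 Ew0] := cards1P (introT eqP cGF).
have hF : forall x, (x \notin G) && (x \in F) = (x == v0).
  by move=> x; rewrite -in_setD Ev0 inE.
have hG : forall x, (x \notin F) && (x \in G) = (x == w0).
  by move=> x; rewrite -in_setD Ew0 inE.
have := hF v0; rewrite eqxx => /andP[v0G v0F].
have := hG w0; rewrite eqxx => /andP[w0F w0G].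
have EI : F :&: G = F :\ v0.
  apply/setP => x; rewrite !inE; move: (hF x).
  by case: (x \in F); case: (x \in G); case: (x == v0).
have EIG : F :&: G = G :\ w0.
  apply/setP => x; rewrite !inE; move: (hG x).
  by case: (x \in F); case: (x \in G); case: (x == w0).
have EG : G = w0 |: (F :\ v0).
  apply/setP => x; rewrite !inE; move: (hF x) (hG x).
  by case: (x \in F); case: (x \in G); case: (x == v0); case: (x == w0).
have EU : F :|: G = F :|: [set w0].
  apply/setP => x; rewrite !inE; move: (hF x) (hG x).
  by case: (x \in F); case: (x \in G); case: (x == v0); case: (x == w0).
have uniq : forall v w, v \in F -> w \notin F -> G = w |: (F :\ v) ->
    (v == v0) && (w == w0).
  move=> v w vF wF E; apply/andP; split.
    rewrite -hF vF andbT E !inE eqxx /= orbF.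
    by apply: contraNneq wF => <-.
  by rewrite -hG wF E !inE eqxx.
rewrite EU /=.
set c := sgn R F v0 * sgn R G w0 * b G.
transitivity (\sum_(w | (w \notin F) && (F :|: [set w] \in faces_sz X m.+2))
     \sum_(v in F) (if (v == v0) && (w == w0) then c else 0)); last first.
  apply: eq_bigr => w /andP[wF _]; apply: eq_bigr => v vF.
  case: (eqVneq G (w |: (F :\ v))) => [E|NE].
    by have /andP[/eqP ev /eqP ew] := uniq v w vF wF E; rewrite ev ew !eqxx.
  case: (boolP ((v == v0) && (w == w0))) => // /andP[/eqP ev /eqP ew].
  by exfalso; move/eqP: NE; apply; rewrite ev ew.
transitivity (\sum_(w | (w \notin F) && (F :|: [set w] \in faces_sz X m.+2))
     (if w == w0 then c else 0)); last first.
  apply: eq_bigr => w _.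
  rewrite (bigD1 v0) //= eqxx /= big1 ?addr0 // => v /andP[_ /negPf ->] //.
case: (boolP (F :|: [set w0] \in faces_sz X m.+2)) => Pw0.
  rewrite (bigD1 w0) /=; last by rewrite w0F Pw0.
  rewrite eqxx big1 ?addr0; last by move=> w /andP[_ /negPf ->].
  by rewrite /c EI incid_del // -EI EIG incid_del.
rewrite mul0r big1 // => w /andP[_ Pw]; case: eqP => // E.
by move: Pw Pw0; rewrite E => ->.
Qed.

Lemma abs_le_sq (R : rcfType) (x y : R) : 0 <= y -> x ^+ 2 <= y ^+ 2 -> `|x| <= y.
Proof.
move=> y0 h; rewrite ler_norml; apply/andP; split; nra.
Qed.

Lemma sizeE n (X : {set {set 'I_n}}) k m (F : {set 'I_n}) :
  complete_skeleton X k -> (m <= k)%N -> (F \in faces_sz X m) = (#|F| == m).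
Proof.
move=> cs mk; rewrite inE; case: eqP => [E|_]; rewrite ?andbF ?andbT //.
by apply: cs; rewrite E.
Qed.

Unset Implicit Arguments.
Lemma cardD1S n m (F : {set 'I_n}) v : v \in F -> #|F| = m.+1 -> #|F :\ v| = m.
Proof. by move=> vF cF; move: (cardsD1 v F); rewrite vF cF add1n => -[->]. Qed.

Theorem proposition3p7 (R : rcfType) (n k : nat) (X : {set {set 'I_n}}) (d f : R) :
  (1 <= k)%N ->
  simplicial_complex X -> complex_dim X k -> complete_skeleton X k ->
  0 < d -> 0 <= f ->
  (forall F, F \in faces_sz X k.-1 ->
     \sum_(v : 'I_n | v \notin F) ((lk_deg X k F v)%:R - d) ^+ 2
       <= f ^+ 2 * (n%:R - k%:R + 1)) ->
  (forall b : {set 'I_n} -> R, inB X k b -> ip X k b b = 1 ->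
     `|ip X k (Aop X k b) b - d| <= k%:R * f) /\
  (forall b z : {set 'I_n} -> R, inB X k b -> ip X k b b = 1 -> ip X k z z = 1 ->
     (forall b' : {set 'I_n} -> R, inB X k b' -> ip X k b' z = 0) ->
     `|ip X k (Aop X k b) z| <= k%:R * f).
Proof.
case: k => [//|m] _ scx [dimle [F0 [F0X cF0]]] cs d0 f0 hyp.
have Sk F : (F \in faces_sz X m.+1) = (#|F| == m.+1) := sizeE F cs (leqnn _).
have Sk1 F : (F \in faces_sz X m) = (#|F| == m) := sizeE F cs (leqnSn m).
have ipE : forall u v : {set 'I_n} -> R, ip X m.+1 u v = \sum_(F : {set 'I_n} | #|F| == m.+1) u F * v F.
  by move=> u v; apply: eq_bigl => F; rewrite Sk.
have nge : (m.+2 <= n)%N by rewrite -cF0 -[X in (_ <= X)%N](card_ord n); exact: max_card.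
have n0 : n%:R != 0 :> R by rewrite pnatr_eq0 -lt0n; apply: leq_trans nge.
pose D (F : {set 'I_n}) := #|[set u : 'I_n | (u \notin F) && (F :|: [set u] \in faces_sz X m.+2)]|.
pose eps (F : {set 'I_n}) : R := (D F)%:R - d.
have lkD : forall (G : {set 'I_n}) (w : 'I_n), w \notin G -> lk_deg X m.+1 G w = D (w |: G).
  move=> G w wG; rewrite /lk_deg /D; apply: eq_card => u; rewrite !inE.
  have -> : G :|: [set u; w] = (w |: G) :|: [set u].
    apply/setP => x; rewrite !inE.
    by case: (x == u); case: (x == w); case: (x \in G).
  by case: (u \in G); case: (u == w).
have key : forall b : {set 'I_n} -> R, inB X m.+1 b -> ip X m.+1 b b = 1 ->
   (forall F : {set 'I_n}, #|F| = m.+1 -> Aop X m.+1 b F = (D F)%:R * b F) /\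
   \sum_(F : {set 'I_n} | #|F| == m.+1) (eps F * b F) ^+ 2 <= (m.+1%:R * f) ^+ 2.
  move=> b [h hb] bn.
  have bF : forall F : {set 'I_n}, #|F| = m.+1 -> b F = \sum_(v in F) sgn R F v * h (F :\ v).
    move=> F cF; rewrite hb ?Sk ?cF //; exact: cobound_eq.
  have dz : forall H : {set 'I_n}, #|H| = m.+2 -> \sum_(u in H) sgn R H u * b (H :\ u) = 0.
    move=> H cH; rewrite -[RHS](delta_zero h H); apply: eq_bigr => u uH; rewrite bF //.
    by move: cH; rewrite (cardsD1 u) uH => -[].
  have fl : forall (F : {set 'I_n}) w, #|F| = m.+1 -> w \notin F ->
      \sum_(v in F) sgn R F v * sgn R (w |: (F :\ v)) w * b (w |: (F :\ v)) = b F.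
    move=> F w cF wF; apply: flip_sum => //; apply: dz; by rewrite cardsU1 wF cF.
  have AopE : forall F : {set 'I_n}, #|F| = m.+1 -> Aop X m.+1 b F = (D F)%:R * b F.
    move=> F cF; rewrite /Aop.
    rewrite (eq_bigl (fun G : {set 'I_n} => #|G| == m.+1)); last by move=> G; rewrite Sk.
    rewrite (eq_bigr (fun G => \sum_(w | (w \notin F) && (F :|: [set w] \in faces_sz X m.+2))
       \sum_(v in F) (if G == w |: (F :\ v) then sgn R F v * sgn R G w * b G else 0))); last first.
      by move=> G /eqP cG; apply: A_expand.
    rewrite exchange_big /=.
    rewrite (eq_bigr (fun w => b F)); last first.
      move=> w /andP[wF _]; rewrite exchange_big /= -[RHS](fl F w cF wF).
      apply: eq_bigr => v vF.
      have cY : #|w |: (F :\ v)| == m.+1.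
        have wFv : w \notin F :\ v by rewrite !inE negb_and wF orbT.
        by rewrite cardsU1 wFv add1n eqSS (@cardD1S _ _ _ _ vF cF).
      rewrite (bigD1 (w |: (F :\ v))) //= eqxx big1 ?addr0 // => G /andP[_ /negPf ->] //.
    transitivity (\sum_(w in [set u : 'I_n | (u \notin F) && (F :|: [set u] \in faces_sz X m.+2)]) b F).
      by apply: eq_bigl => w; rewrite inE.
    by rewrite sumr_const mulr_natl.
  pose g (G : {set 'I_n}) : R :=
    n%:R^-1 * \sum_(w in ~: G) sgn R (w |: G) w * b (w |: G).
  have ng : forall G, n%:R * g G = \sum_(w in ~: G) sgn R (w |: G) w * b (w |: G).
    by move=> G; rewrite /g mulrA mulfV // mul1r.
  have bg : forall F : {set 'I_n}, #|F| = m.+1 -> b F = \sum_(v in F) sgn R F v * g (F :\ v).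
    move=> F cF.
    pose S v := \sum_(w in ~: F) sgn R (w |: (F :\ v)) w * b (w |: (F :\ v)).
    have E1 : forall v, v \in F -> \sum_(w in ~: (F :\ v)) sgn R (w |: (F :\ v)) w * b (w |: (F :\ v))
        = sgn R F v * b F + S v.
      move=> v vF; rewrite (bigD1 v) /=; last by rewrite !inE eqxx.
      rewrite setD1K //; congr (_ + _); apply: eq_bigl => w; rewrite !inE.
      by case: (eqVneq w v) => [->|] /=; [rewrite vF | rewrite andbT].
    transitivity (n%:R^-1 * \sum_(v in F) sgn R F v * (sgn R F v * b F + S v)); last first.
      rewrite mulr_sumr; apply: eq_bigr => v vF; rewrite /g E1 //; ring.
    have S1 : \sum_(v in F) sgn R F v * (sgn R F v * b F + S v) =
              \sum_(v in F) b F + \sum_(w in ~: F) b F.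
      rewrite (eq_bigr (fun v => b F + sgn R F v * S v)); last first.
        by move=> v _; rewrite mulrDr mulrA sgn_sq mul1r.
      rewrite big_split /=; congr (_ + _).
      rewrite /S; under eq_bigr do rewrite mulr_sumr.
      rewrite exchange_big /=; apply: eq_bigr => w; rewrite inE => wF.
      rewrite -(fl F w cF wF); apply: eq_bigr => v _; ring.
    by rewrite S1 !sumr_const -mulrnDr cardsC card_ord -[b F *+ n]mulr_natr mulrCA mulVf // mulr1.
  have gn : \sum_(G : {set 'I_n} | #|G| == m) g G ^+ 2 = n%:R^-1.
    have H1 : n%:R * \sum_(G : {set 'I_n} | #|G| == m) g G ^+ 2 = 1.
      rewrite mulr_sumr.
      transitivity (\sum_(G : {set 'I_n} | #|G| == m) \sum_(w in ~: G)
                     g G * (sgn R (w |: G) w * b (w |: G))).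
        apply: eq_bigr => G _; rewrite expr2 mulrCA ng mulr_sumr //.
      rewrite -(@dcount _ _ m (fun G w => g G * (sgn R (w |: G) w * b (w |: G)))).
      rewrite -[RHS]bn ipE; apply: eq_bigr => F /eqP cF.
      rewrite [X in _ = _ * X](bg F cF) mulr_sumr; apply: eq_bigr => v vF; rewrite setD1K //; ring.
    by apply: (mulfI n0); rewrite H1 mulfV.
  split; first exact: AopE.
  have step1 : forall F : {set 'I_n}, #|F| = m.+1 ->
      b F ^+ 2 <= m.+1%:R * \sum_(v in F) g (F :\ v) ^+ 2.
    move=> F cF; rewrite (bg F cF).
    apply: le_trans (@CS _ _ (fun v => v \in F) (fun v => sgn R F v) (fun v => g (F :\ v))) _.
    rewrite (eq_bigr (fun _ => 1)); last by move=> v _; rewrite expr2 sgn_sq.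
    by rewrite sumr_const cF.
  have hypG : forall G : {set 'I_n}, #|G| == m ->
      \sum_(w in ~: G) eps (w |: G) ^+ 2 <= f ^+ 2 * (n%:R - m.+1%:R + 1).
    move=> G cG; have GS : G \in faces_sz X m by rewrite Sk1.
    have := hyp G GS.
    suff -> : \sum_(w in ~: G) eps (w |: G) ^+ 2 =
        \sum_(v : 'I_n | v \notin G) ((lk_deg X m.+1 G v)%:R - d) ^+ 2 by [].
    apply: eq_big => [w|w]; first by rewrite inE.
    by rewrite inE => wG; rewrite /eps lkD.
  have B1 : \sum_(F : {set 'I_n} | #|F| == m.+1) (eps F * b F) ^+ 2 <=
      m.+1%:R * \sum_(F : {set 'I_n} | #|F| == m.+1)
         \sum_(v in F) eps (v |: (F :\ v)) ^+ 2 * g (F :\ v) ^+ 2.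
    rewrite mulr_sumr; apply: ler_sum => F /eqP cF.
    have -> : \sum_(v in F) eps (v |: (F :\ v)) ^+ 2 * g (F :\ v) ^+ 2 =
        eps F ^+ 2 * \sum_(v in F) g (F :\ v) ^+ 2.
      by rewrite mulr_sumr; apply: eq_bigr => v vF; rewrite setD1K.
    rewrite mulrCA exprMn; apply: ler_wpM2l; [exact: sqr_ge0 | exact: step1].
  rewrite (@dcount _ _ m (fun G w => eps (w |: G) ^+ 2 * g G ^+ 2)) in B1.
  have B2 : \sum_(G : {set 'I_n} | #|G| == m) \sum_(w in ~: G) eps (w |: G) ^+ 2 * g G ^+ 2
      <= \sum_(G : {set 'I_n} | #|G| == m) g G ^+ 2 * (f ^+ 2 * (n%:R - m.+1%:R + 1)).
    apply: ler_sum => G cG; rewrite -mulr_suml mulrC.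
    by apply: ler_wpM2l; [exact: sqr_ge0 | exact: hypG].
  rewrite -mulr_suml gn in B2.
  apply: le_trans B1 _.
  apply: le_trans (ler_wpM2l (ler0n _ _) B2) _.
  have E : m.+1%:R * (n%:R^-1 * (f ^+ 2 * (n%:R - m.+1%:R + 1))) =
      m.+1%:R * f ^+ 2 * (1 - m%:R / n%:R) :> R.
    rewrite -natr1; field; exact: n0.
  rewrite E.
  have h1 : 1 - m%:R / n%:R <= m.+1%:R :> R.
    have : 0 <= m%:R / n%:R :> R by apply: divr_ge0; apply: ler0n.
    rewrite -natr1; have : 0 <= m%:R :> R by apply: ler0n.
    lra.
  have H0 : 0 <= m.+1%:R * f ^+ 2 :> R by apply: mulr_ge0; [apply: ler0n | apply: sqr_ge0].
  have -> : (m.+1%:R * f) ^+ 2 = m.+1%:R * f ^+ 2 * m.+1%:R :> R by ring.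
  exact: ler_wpM2l.
have kf0 : 0 <= m.+1%:R * f by apply: mulr_ge0 => //; apply: ler0n.
split.
  move=> b bB bn; have [AopE bnd] := key b bB bn.
  have -> : ip X m.+1 (Aop X m.+1 b) b - d =
      \sum_(F : {set 'I_n} | #|F| == m.+1) (eps F * b F) * b F.
    have -> : d = d * ip X m.+1 b b by rewrite bn mulr1.
    rewrite !ipE mulr_sumr -sumrB; apply: eq_bigr => F /eqP cF; rewrite AopE // /eps; ring.
  apply: abs_le_sq => //.
  apply: le_trans (CS _ _ _) _.
  rewrite (_ : \sum_(F : {set 'I_n} | #|F| == m.+1) b F ^+ 2 = 1) ?mulr1 //.
  by rewrite -bn ipE; apply: eq_bigr => F _; rewrite expr2.
move=> b z bB bn zn orth; have [AopE bnd] := key b bB bn.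
have hz := orth b bB.
have -> : ip X m.+1 (Aop X m.+1 b) z =
    \sum_(F : {set 'I_n} | #|F| == m.+1) (eps F * b F) * z F.
  transitivity (ip X m.+1 (Aop X m.+1 b) z - d * ip X m.+1 b z); first by rewrite hz mulr0 subr0.
  rewrite !ipE mulr_sumr -sumrB; apply: eq_bigr => F /eqP cF; rewrite AopE // /eps; ring.
apply: abs_le_sq => //.
apply: le_trans (CS _ _ _) _.
rewrite (_ : \sum_(F : {set 'I_n} | #|F| == m.+1) z F ^+ 2 = 1) ?mulr1 //.
by rewrite -zn ipE; apply: eq_bigr => F _; rewrite expr2.
Qed.
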